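(* Let $(\mathcal{G},\mu\circ\lambda)$ be a measured groupoid and let $\pi$ be a probability measure equivalent to $\mu\circ\lambda$ (with $t_*\pi=s_*\pi=\mu$). Let $(\check{\mathcal{B}},\check\theta_\mu)$ be the Poisson boundary of the Markov operator generated by the reflected measure $\check\pi$ with initial distribution $\mu$. Then $\check\theta_\mu$ is $\pi$-stationary: $\pi*\check\theta_\mu=\check\theta_\mu$, where $\pi*\check\theta_\mu:=\int_X\int_{\mathcal{G}}(g^{-1})_*\check\theta^x\,d\pi^x(g)\,d\mu(x)$.
   Context: $\mathcal{G}$ is a Borel groupoid with standard Borel unit space $X$, source $s$, target $t$, Borel Haar system $\lambda$ and quasi-invariant probability $\mu$ on $X$. $\check\pi$ is the image of $\pi$ under inversion; $\pi^x$ is the disintegration of $\pi$ over $t$ (supported on $t^{-1}(x)$). Disintegrate $\check\pi$ over $t$ as $\check\pi^x$ and set $\check\pi^g=g_*\check\pi^{s(g)}$. On $\Omega_{\mathcal{G}}=\{(g_0,g_1,\dots):t(g_i)=t(g_j)\}$, $\check{\mathbb{P}}_g$ is the Markov measure starting at $\delta_g$ with transitions $\check\pi^{g_{n-1}}$ and $\check{\mathbb{P}}_m=\int\check{\mathbb{P}}_g dm(g)$. The Poisson boundary $\check{\mathcal{B}}$ is the space of ergodic components of stable equivalence of the shift $T(g_0,g_1,\dots)=(g_1,\dots)$, with map $\check{\mathbf{bnd}}$, $\check\theta_\mu=\check{\mathbf{bnd}}_*\check{\mathbb{P}}_\mu$, target induced by $t(g_0)$, $\mathcal{G}$-action induced by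 diagonal left multiplication; $\check\theta^x=\check{\mathbf{bnd}}_*\check{\mathbb{P}}_x$ is the disintegration of $\check\theta_\mu$ over $X$. For $g\in t^{-1}(x)$, $g^{-1}$ maps the fiber $\check{\mathcal{B}}^x$ to $\check{\mathcal{B}}^{s(g)}$. *)

(* Defs.v *)
From HB Require Import structures.
From mathcomp Require Import all_boot all_order all_algebra.
From mathcomp Require Import all_classical all_reals all_analysis.
From mathcomp Require Import measurable_realfun.
Set Implicit Arguments. Unset Strict Implicit. Unset Printing Implicit Defensive.
Import Order.TTheory GRing.Theory Num.Theory.
Local Open Scope classical_set_scope.
Local Open Scope ring_scope.

Definition standard_borel (R : realType) (d : measure_display)
    (X : measurableType d) : Prop :=
  exists f : X -> R, [/\ injective f, measurable_fun setT f,
    measurable (range f) & forall A, measurable A -> measurable (f @` A)].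

(* Borel groupoid with unit space X: source s, target t, units u,
   (partial) multiplication mul (g h defined when s g = t h; mul is a total
   function whose values off the composable pairs are irrelevant), inverse. *)
Record is_borel_groupoid (dX dG : measure_display) (X : measurableType dX)
    (G : measurableType dG) (s t : G -> X) (u : X -> G) (mul : G -> G -> G)
    (inv : G -> G) : Prop := {
  gpd_s_unit : forall x, s (u x) = x;
  gpd_t_unit : forall x, t (u x) = x;
  gpd_s_mul : forall g h, s g = t h -> s (mul g h) = s h;
  gpd_t_mul : forall g h, s g = t h -> t (mul g h) = t g;
  gpd_assoc : forall g h k, s g = t h -> s h = t k ->
    mul (mul g h) k = mul g (mul h k);
  gpd_unit_l : forall g, mul (u (t g)) g = g;
  gpd_unit_r : forall g, mul g (u (s g)) = g;
  gpd_s_inv : forall g, s (inv g) = t g;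
  gpd_t_inv : forall g, t (inv g) = s g;
  gpd_inv_r : forall g, mul g (inv g) = u (t g);
  gpd_inv_l : forall g, mul (inv g) g = u (s g);
  gpd_meas_s : measurable_fun setT s;
  gpd_meas_t : measurable_fun setT t;
  gpd_meas_u : measurable_fun setT u;
  gpd_meas_inv : measurable_fun setT inv;
  gpd_meas_comp : measurable [set p : G * G | s p.1 = t p.2];
  gpd_meas_mul : measurable_fun [set p : G * G | s p.1 = t p.2]
                   (fun p => mul p.1 p.2) }.

Record haar_system (R : realType) (dX dG : measure_display)
    (X : measurableType dX) (G : measurableType dG) (s t : G -> X)
    (mul : G -> G -> G) (lambda : X -> {measure set G -> \bar R}) : Prop := {
  haar_support : forall x, lambda x [set g | t g <> x] = 0%E;
  haar_borel : forall A, measurable A -> measurable_fun setT ((fun x => lambda x A) : X -> \bar R);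
  haar_invariant : forall g A, measurable A ->
    lambda (s g) [set k | t k = s g /\ A (mul g k)] = lambda (t g) A;
  haar_sigma_finite : forall x, sigma_finite setT (lambda x) }.

Definition mu_lambda (R : realType) (dX dG : measure_display)
    (X : measurableType dX) (G : measurableType dG)
    (mu : {measure set X -> \bar R}) (lambda : X -> {measure set G -> \bar R})
    : set G -> \bar R :=
  fun A => (\int[mu]_x lambda x A)%E.

Definition equiv_measures (R : realType) (d : measure_display)
    (T : measurableType d) (m1 m2 : set T -> \bar R) : Prop :=
  forall A, measurable A -> (m1 A = 0%E <-> m2 A = 0%E).

Definition disintegration (R : realType) (dX dG : measure_display)
    (X : measurableType dX) (G : measurableType dG)
    (mu : {measure set X -> \bar R}) (nu : set G -> \bar R) (t : G -> X)
    (k : X -> probability G R) : Prop :=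
  [/\ forall A, measurable A -> measurable_fun setT ((fun x => k x A) : X -> \bar R),
      forall A, measurable A -> nu A = (\int[mu]_x k x A)%E
    & forall x, k x [set g | t g <> x] = 0%E].

Definition coord_sets (dG : measure_display) (G : measurableType dG)
    : set (set (nat -> G)) :=
  fun S => exists n (A : set G), measurable A /\ S = [set w | A (w n)].

Definition path_space (dG : measure_display) (G : measurableType dG) :=
  g_sigma_algebraType (@coord_sets _ G).

Definition path_shift (T : Type) (w : nat -> T) : nat -> T := fun n => w n.+1.

(* P g is the Markov measure started at delta_g with transition probabilities
   check_pi^h = h_* check_pi^{s h} (check_pi^x = picx x): Markov property at
   time 0.  This determines P uniquely on cylinders. *)
Definition markov_family (R : realType) (dX dG : measure_display)
    (X : measurableType dX) (G : measurableType dG) (s t : G -> X)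
    (mul : G -> G -> G) (picx : X -> probability G R)
    (P : G -> probability (path_space G) R) : Prop :=
  (forall B : set (path_space G), measurable B ->
     measurable_fun setT ((fun g => P g B) : G -> \bar R)) /\
  (forall g (A0 : set G) (B : set (path_space G)), measurable A0 -> measurable B ->
     P g [set w | A0 (w 0%N) /\ B (path_shift w)] =
     ((\1_A0 g)%:E * \int[picx (s g)]_(h in [set h | t h = s g]) P (mul g h) B)%E).

(* Main.v *)
Require Import Defs.
From HB Require Import structures.
From mathcomp Require Import all_boot all_order all_algebra.
From mathcomp Require Import all_classical all_reals all_analysis.
From mathcomp Require Import measurable_realfun.
Import Order.TTheory GRing.Theory Num.Theory.
Local Open Scope classical_set_scope.
Local Open Scope ring_scope.
Local Open Scope ereal_scope.
Import HBNNSimple.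
Lemma ge0_integral_null_le d (T : measurableType d) (R : realType)
  (mu : {measure set T -> \bar R}) (N : set T) (f g : T -> \bar R) :
  measurable N -> mu N = 0 -> (forall x, 0 <= f x) -> (forall x, 0 <= g x) ->
  (forall x, ~ N x -> f x = g x) -> \int[mu]_x f x <= \int[mu]_x g x.
Proof.
move=> mN N0 f0 g0 fg.
rewrite ge0_integralTE// ge0_integralTE//.
apply: ge_ereal_sup => _ [h /= hf <-].
have mNc : measurable (~` N) by exact: measurableC.
apply: ereal_sup_ubound; exists (proj_nnsfun h mNc).
  move=> x /=; rewrite mindicE; case: (boolP (x \in ~` N)) => [/set_mem xN|_].
    by rewrite mulr1 -fg//; exact: hf.
  by rewrite mulr0 g0.
rewrite -mrestrict -(integral_nnsfun _ mNc).
have -> : sintegral mu h = \int[mu]_x (h x)%:E by rewrite integral_nnsfun// patch_setT.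
rewrite [RHS](ge0_negligible_integral _ _ _ _ N0)//=.
- by rewrite setTD.
- exact/measurable_EFinP.
- by move=> x _; rewrite lee_fin.
Qed.
Section mixture.
Context dX dY dZ (X : measurableType dX) (Y : measurableType dY)
  (Z : measurableType dZ) (R : realType).
Variables (mu : measure X R) (l : X -> measure Z R) (m : measure Y R).
Variables (phi : Y -> Z).
Hypothesis mphi : measurable_fun setT phi.
Hypothesis ml : forall U, measurable U -> measurable_fun setT (l ^~ U).
Hypothesis hm : forall A, measurable A -> m (phi @^-1` A) = \int[mu]_x l x A.

Let mpre A : measurable A -> measurable (phi @^-1` A).
Proof. by move=> mA; rewrite -[X in measurable X]setTI; exact: mphi. Qed.

Let mixture_nnsfun (f : {nnsfun Z >-> R}) :
  \int[m]_y (f (phi y))%:E = \int[mu]_x \int[l x]_z (f z)%:E.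
Proof.
under [in LHS]eq_integral do rewrite fimfunE -fsumEFin//.
rewrite ge0_integral_fsum//; last 2 first.
  - move=> r; apply/measurable_EFinP/measurable_funM => //.
    apply: measurable_indic; exact/mpre.
  - by move=> r z _; rewrite EFinM nnfun_muleindic_ge0.
under [in RHS]eq_integral.
  move=> x _.
  under eq_integral.
    by move=> z _; rewrite fimfunE -fsumEFin//; over.
  rewrite /= ge0_integral_fsum//; last 2 first.
    - by move=> r; exact/measurable_EFinP/measurableT_comp.
    - by move=> r z _; rewrite EFinM nnfun_muleindic_ge0.
  under eq_fsbigr.
    move=> r _.
    rewrite (integralZl_indic _ (fun r => f @^-1` [set r]))//; last first.
      by move=> r0; rewrite preimage_nnfun0.
    rewrite integral_indic// setIT.
    over.
  over.
rewrite /= ge0_integral_fsum//; last 2 first.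
  - move=> r; apply: measurable_funeM.
    exact: ml.
  - move=> n y _.
    have := mulemu_ge0 (fun n => f @^-1` [set n]).
    by apply; exact: preimage_nnfun0.
apply: eq_fsbigr => r _.
rewrite (integralZl_indic _ (fun r => phi @^-1` (f @^-1` [set r])))//; last 2 first.
  by move=> r0; rewrite preimage_nnfun0// preimage_set0.
  exact/mpre.
rewrite integral_indic ?setIT; last exact/mpre.
rewrite hm//.
have [r0|r0] := leP 0%R r.
  by rewrite ge0_integralZl//; exact: ml.
rewrite (preimage_nnfun0 _ r0) integral0_eq ?mule0 ?integral0_eq // => x _; rewrite measure0 ?mule0.
  by [].
by [].
Qed.

Lemma mixture (f : Z -> \bar R) : (forall z, 0 <= f z) -> measurable_fun setT f ->
  \int[m]_y f (phi y) = \int[mu]_x \int[l x]_z f z.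
Proof.
move=> f0 mf.
pose f_ := nnsfun_approx measurableT mf.
transitivity (\int[m]_y (lim ((f_ n (phi y))%:E @[n --> \oo]))).
  by apply/eq_integral => z _; apply/esym/cvg_lim => //=; exact: cvg_nnsfun_approx.
rewrite monotone_convergence//; last 3 first.
  by move=> n; apply/measurable_EFinP; exact: measurableT_comp.
  by move=> n z _; rewrite lee_fin.
  by move=> z _ a b ab; rewrite lee_fin; exact/lefP/nd_nnsfun_approx.
rewrite (_ : (fun _ => _) =
    (fun n => \int[mu]_x (\int[l x]_z (f_ n z)%:E)))//; last first.
  by apply/funext => n; rewrite mixture_nnsfun.
transitivity (\int[mu]_x lim ((\int[l x]_z (f_ n z)%:E) @[n --> \oo])).
  rewrite -monotone_convergence//; last 3 first.
  - move=> n; apply: measurable_fun_integral_kernel => //.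
    + by move=> z; rewrite lee_fin.
    + exact/measurable_EFinP.
  - by move=> n y _; apply: integral_ge0 => // z _; rewrite lee_fin.
  - move=> y _ a b ab; apply: ge0_le_integral => //.
    + by move=> z _; rewrite lee_fin.
    + exact/measurable_EFinP.
    + exact/measurable_EFinP.
    + by move=> z _; rewrite lee_fin; exact/lefP/nd_nnsfun_approx.
apply: eq_integral => y _; rewrite -monotone_convergence//; last 3 first.
  - by move=> n; exact/measurable_EFinP.
  - by move=> n z _; rewrite lee_fin.
  - by move=> z _ a b ab; rewrite lee_fin; exact/lefP/nd_nnsfun_approx.
by apply: eq_integral => z _; apply/cvg_lim => //; exact: cvg_nnsfun_approx.
Qed.
End mixture.
Section Qmeas.
Context d d' (T : measurableType d) (T' : measurableType d') (R : realType).
Definition Qm (m : measure T R) {S : set T} {phi : T -> T'} (mS : measurable S)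
  (mphi : measurable_fun S phi) (B : set T') : \bar R := m (S `&` phi @^-1` B).
Variables (m : measure T R) (S : set T) (phi : T -> T') (mS : measurable S)
  (mphi : measurable_fun S phi).
Let Q0 : Qm m mS mphi set0 = 0.
Proof. by rewrite /Qm preimage_set0 setI0 measure0. Qed.
Let Qge0 B : 0 <= Qm m mS mphi B.
Proof. exact: measure_ge0. Qed.
Let Qsa : semi_sigma_additive (Qm m mS mphi).
Proof.
move=> F mF tF mUF; rewrite /Qm preimage_bigcup setI_bigcupr.
apply: measure_semi_sigma_additive.
- by move=> n; exact: mphi mS (F n) (mF n).
- apply/trivIsetP => i j _ _ ij.
  move/trivIsetP : tF => /(_ i j I I ij) Fij.
  apply/seteqP; split => // w [[_ a] [_ b]].
  have : (F i `&` F j) (phi w) by split.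
  by rewrite Fij.
- by rewrite -setI_bigcupr -preimage_bigcup; exact: mphi mS _ mUF.
Qed.
HB.instance Definition _ := isMeasure.Build _ _ _ (Qm m mS mphi) Q0 Qge0 Qsa.
End Qmeas.
Arguments Qm {d d' T T' R} m {S phi} mS mphi.

Section gm.
Context (R : realType) (dX dG : measure_display) (X : measurableType dX) (G : measurableType dG).
Variables (s t : G -> X) (u : X -> G) (mul : G -> G -> G) (inv : G -> G).
Variables (picx : X -> probability G R) (P : G -> probability (path_space G) R).
Hypothesis hgpd : is_borel_groupoid s t u mul inv.
Hypothesis hset1 : forall x : X, measurable [set x].
Hypothesis hpicx : forall x, picx x [set g | t g <> x] = 0.
Hypothesis hmk : markov_family s t mul picx P.

Definition Spath (x : X) : set (path_space G) := [set w | forall n, t (w n) = x].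
Definition actp (k : G) (w : path_space G) : path_space G := fun n => mul k (w n).

Lemma mcoord n {A : set G} : measurable A ->
  measurable [set w : path_space G | A (w n)].
Proof. by move=> mA; apply: sub_sigma_algebra; exists n, A. Qed.

Lemma mt_eq x : measurable [set g : G | t g = x].
Proof. by have := gpd_meas_t hgpd measurableT (hset1 x); rewrite setTI. Qed.

Lemma mmulk k {B : set G} : measurable B ->
  measurable [set g | t g = s k /\ B (mul k g)].
Proof.
move=> mB.
have mD : measurable [set p : G * G | s p.1 = t p.2] := gpd_meas_comp hgpd.
have mf : measurable_fun [set g | t g = s k] (fun g : G => (k, g)).
  apply: measurable_funTS; apply: measurable_fun_pair => //.
have sub : (fun g => (k, g)) @` [set g | t g = s k] `<=` [set p : G * G | s p.1 = t p.2].
  by move=> _ [g /= tg <-]; rewrite tg.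
have H := measurable_comp mD sub (gpd_meas_mul hgpd) mf.
exact: H (mt_eq (s k)) B mB.
Qed.

Lemma mSpath x : measurable (Spath x).
Proof.
have -> : Spath x = \bigcap_n [set w : path_space G | t (w n) = x].
  apply/seteqP; split => w /= h n. by move=> _; apply: h. by apply: (h n I).
by apply: bigcapT_measurable => n; exact: (mcoord n (mt_eq x)).
Qed.

Lemma mactp {k x} : s k = x -> measurable_fun (Spath x) (actp k).
Proof.
move=> skx.
apply: (@measurability _ _ _ _ (Spath x) (actp k) (@coord_sets _ G)) => //.
move=> _ [C [n [A [mA ->]]] <-].
have -> : Spath x `&` actp k @^-1` [set w | A (w n)] =
   Spath x `&` [set w : path_space G | [set g | t g = s k /\ A (mul k g)] (w n)].
  apply/seteqP; split => w [Sw Aw]; split => //.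
    by rewrite skx; split.
  by case: Aw.
by apply: measurableI; [exact: mSpath|apply: mcoord; exact: mmulk].
Qed.

Lemma mEset x k B : s k = x -> measurable B ->
  measurable (Spath x `&` actp k @^-1` B).
Proof. by move=> skx mB; exact: (mactp skx) (mSpath x) B mB. Qed.

Lemma null_coord n : forall h, P h [set w | t (w n) <> t h] = 0.
Proof.
elim: n => [|n IH] h.
  have mA : measurable (~` [set g | t g = t h]) by apply: measurableC; exact: mt_eq.
  have := hmk.2 h _ setT mA measurableT.
  rewrite (_ : [set w | _ /\ _] = [set w | t (w 0%N) <> t h]); last first.
    by apply/seteqP; split => w /=; [case|move=> ?; split].
  by move=> ->; rewrite indicE memNset ?mul0e//= => /(_ erefl).
have mA : measurable [set w : path_space G | t (w n) <> t h].
  exact: (mcoord n (measurableC (mt_eq (t h)))).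
have := hmk.2 h setT _ measurableT mA.
rewrite (_ : [set w | _ /\ _] = [set w | t (w n.+1) <> t h]); last first.
  by apply/seteqP; split => w /=; [case|move=> ?; split].
move=> ->; rewrite integral0_eq ?mule0// => h' /= th'.
have e := gpd_t_mul hgpd (esym th').
by rewrite -e; exact: IH.
Qed.

Lemma Spath_full h : P h (Spath (t h)) = 1.
Proof.
have N0 : P h (~` Spath (t h)) = 0.
  apply/eqP; rewrite eq_le measure_ge0 andbT.
  apply: (le_trans (@measure_sigma_subadditive _ _ _ (P h) (~` Spath (t h))
     (fun n => [set w : path_space G | t (w n) <> t h]) _ _ _)).
  - by move=> n; exact: (mcoord n (measurableC (mt_eq (t h)))).
  - by apply: measurableC; exact: mSpath.
  - move=> w /= nS; have /existsNP[n hn] := nS.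
    by exists n.
  by rewrite eseries0// => n _ _; exact: null_coord.
have := probability_setC (P h) (measurableC (mSpath (t h))).
by rewrite setCK N0 sube0.
Qed.

Definition cyl (A : nat -> set G) : set (path_space G) := [set w | forall i, A i (w i)].

Lemma mcyl {A} : (forall i, measurable (A i)) -> measurable (cyl A).
Proof.
move=> mA.
have -> : cyl A = \bigcap_i [set w : path_space G | A i (w i)].
  apply/seteqP; split => w /= h i; [move=> _; apply: h|apply: (h i I)].
by apply: bigcapT_measurable => i; exact: (mcoord i (mA i)).
Qed.

Lemma indic_iff (A B : set G) a b : (A a <-> B b) -> \1_A a = \1_B b :> R.
Proof.
move=> h; rewrite !indicE; have -> : (a \in A) = (b \in B); last by [].
by apply/idP/idP => /set_mem H; apply/mem_set; apply/h.
Qed.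

Lemma cyl_eq N : forall A, (forall i, measurable (A i)) ->
  (forall i, (N <= i)%N -> A i = setT) ->
  forall h k, s k = t h ->
  P h (Spath (t h) `&` actp k @^-1` cyl A) = P (mul k h) (cyl A).
Proof.
elim: N => [|N IH] A mA AT h k skh.
  have -> : Spath (t h) `&` actp k @^-1` cyl A = Spath (t h).
    apply/seteqP; split => w; first by case.
    by move=> Sw; split => // i; rewrite AT.
  have -> : cyl A = setT by apply/seteqP; split => // w _ i; rewrite AT.
  by rewrite Spath_full probability_setT.
pose A' := fun i => A i.+1.
have mA' : forall i, measurable (A' i) by move=> i; exact: mA.
have AT' : forall i, (N <= i)%N -> A' i = setT by move=> i Ni; apply: AT.
have mA0' := mmulk k (mA 0%N).
rewrite skh in mA0'.
have mE' := mEset (t h) k (cyl A') skh (mcyl mA').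
have := hmk.2 h _ _ mA0' mE'.
rewrite (_ : [set w | _ /\ _] = Spath (t h) `&` actp k @^-1` cyl A); last first.
  apply/seteqP; split => w /=.
    move=> [[t0 A0] [S' C']]; split; case=> [|n] //; [exact: (S' n)|exact: (C' n)].
  move=> [S' C']; split; [split; [exact: S'|exact: C']|split => n; [exact: S'|exact: C']].
move=> ->.
have := hmk.2 (mul k h) (A 0%N) (cyl A') (mA 0%N) (mcyl mA').
rewrite (_ : [set w | _ /\ _] = cyl A); last first.
  apply/seteqP; split => w /=.
    by move=> [A0 C'] [|i] //; exact: (C' i).
  by move=> C'; split => // i; exact: C'.
move=> ->.
have skh' : s (mul k h) = s h := gpd_s_mul hgpd skh.
rewrite skh'.
congr (_ * _).
  congr (_%:E); apply: indic_iff; split; [by case|by move=> ?; split].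
apply: eq_integral => h' /set_mem /= th'.
have e1 : t (mul h h') = t h := gpd_t_mul hgpd (esym th').
rewrite (gpd_assoc hgpd skh (esym th')) -e1.
by apply: IH => //; rewrite e1.
Qed.

Definition Cyl : set (set (path_space G)) := [set C | exists N (A : nat -> set G),
  [/\ (forall i, measurable (A i)), (forall i, (N <= i)%N -> A i = setT) & C = cyl A]].

Lemma Cyl_setI : setI_closed Cyl.
Proof.
move=> _ _ [N1 [A1 [m1 T1 ->]]] [N2 [A2 [m2 T2 ->]]].
exists (maxn N1 N2), (fun i => A1 i `&` A2 i); split.
- by move=> i; exact: measurableI.
- by move=> i; rewrite geq_max => /andP[h1 h2]; rewrite T1 // T2 // setIT.
- apply/seteqP; split => w /=; first by move=> [h1 h2] i; split.
  by move=> h; split => i; have [] := h i.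
Qed.

Lemma Cyl_gen : @measurable _ (path_space G) = <<s Cyl >>.
Proof.
apply/seteqP; split.
  apply: smallest_sub; first exact: smallest_sigma_algebra.
  move=> _ [n [A [mA ->]]]; apply: sub_sigma_algebra.
  exists n.+1, (fun i => if i == n then A else setT); split.
  - by move=> i; case: ifP.
  - by move=> i ni; case: ifP => // /eqP ein; move: ni; rewrite ein ltnn.
  - apply/seteqP; split => w /=.
      by move=> Aw i; case: ifP => // /eqP ->.
    by move=> h; have := h n; rewrite eqxx.
apply: smallest_sub; first exact: sigma_algebra_measurable.
by move=> _ [N [A [mA _ ->]]]; exact: mcyl.
Qed.

Lemma equivariance h k B : s k = t h -> measurable B ->
  P h (Spath (t h) `&` actp k @^-1` B) = P (mul k h) B.
Proof.
move=> skh mB.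
have mS := mSpath (t h).
have mphi := mactp skh.
have := @measure_unique _ R (path_space G) Cyl (fun _ => setT) Cyl_gen Cyl_setI
  _ _ (Qm (P h) mS mphi) (P (mul k h)) _ _ B mB.
apply.
- move=> _; exists 0%N, (fun _ => setT); split => //.
  by apply/seteqP; split.
- by apply/seteqP; split => // w _; exists 0%N.
- by move=> _ [N [A [mA AT ->]]]; rewrite /Qm; exact: (@cyl_eq N A mA AT h k skh).
- move=> _; rewrite /Qm; apply: (le_lt_trans (probability_le1 _ _)) => //.
  exact: (mphi mS setT measurableT).
by rewrite ltey.
Qed.

End gm.

Theorem proposition4p4 (R : realType) (dX dG : measure_display)
    (X : measurableType dX) (G : measurableType dG)
    (s t : G -> X) (u : X -> G) (mul : G -> G -> G) (inv : G -> G)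
    (lambda : X -> {measure set G -> \bar R}) (mu : probability X R)
    (pi : probability G R) (pix picx : X -> probability G R)
    (P : G -> probability (path_space G) R) :
  standard_borel R X ->
  is_borel_groupoid s t u mul inv ->
  haar_system s t mul lambda ->
  (* mu is quasi-invariant *)
  equiv_measures (mu_lambda mu lambda)
    (fun A => mu_lambda mu lambda (inv @^-1` A)) ->
  (* pi is equivalent to mu o lambda, with t_* pi = s_* pi = mu *)
  equiv_measures pi (mu_lambda mu lambda) ->
  (forall B, measurable B -> pi (t @^-1` B) = mu B) ->
  (forall B, measurable B -> pi (s @^-1` B) = mu B) ->
  (* pi^x : disintegration of pi over t;  check_pi^x : of check_pi over t *)
  disintegration mu pi t pix ->
  disintegration mu (fun A => pi (inv @^-1` A)) t picx ->
  (* P g = check_P_g : Markov measures with transitions check_pi^g *)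
  markov_family s t mul picx P ->
  (* pi * check_theta_mu = check_theta_mu, tested on the boundary sigma-algebra
     (measurable path_shift-invariant sets of paths) *)
  forall A : set (path_space G), measurable A -> (@path_shift G : path_space G -> path_space G) @^-1` A = A ->
  (\int[mu]_x \int[pix x]_g
      P (u x) [set w | (forall n, t (w n) = x) /\
                       A (fun n => mul (inv g) (w n))])%E
  = (\int[mu]_x P (u x) A)%E.
Proof.
move=> hsb hgpd _ _ _ _ _ [pixm pixeq pixsupp] [picxm picxeq picxsupp] hmk A mA hA.
have hset1 : forall x : X, measurable [set x].
  case: hsb => f [finj mf _ _] x.
  have -> : [set x] = f @^-1` [set f x].
    by apply/seteqP; split => y /=; [move->|move/finj].
  by have := mf measurableT [set f x] (measurable_set1 _); rewrite setTI.
have mt : forall x, measurable [set g : G | t g = x].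
  by move=> x; have := gpd_meas_t hgpd measurableT (hset1 x); rewrite setTI.
have mtN : forall x, measurable [set g : G | t g <> x].
  by move=> x; exact: (measurableC (mt x)).
have mF : measurable_fun setT (fun g => P g A) := hmk.1 A mA.
have mFi : measurable_fun setT (fun g => P (inv g) A).
  exact: (measurableT_comp mF (gpd_meas_inv hgpd)).
transitivity (\int[pi]_g P (inv g) A).
  transitivity (\int[mu]_x \int[pix x]_g P (inv g) A).
    apply: eq_integral => x _.
    have fg : forall g, ~ [set g : G | t g <> x] g ->
        P (u x) [set w | (forall n, t (w n) = x) /\
                       A (fun n => mul (inv g) (w n))] = P (inv g) A.
      move=> g /= /contrapT tg.
      have sk : s (inv g) = t (u x) by rewrite (gpd_s_inv hgpd) (gpd_t_unit hgpd).
      have := @equivariance R dX dG X G s t u mul inv picx P hgpd hset1 hmk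
        (u x) (inv g) A sk mA.
      have -> : mul (inv g) (u x) = inv g.
        by rewrite -tg -(gpd_s_inv hgpd) (gpd_unit_r hgpd).
      by rewrite (gpd_t_unit hgpd).
    apply/eqP; rewrite eq_le; apply/andP; split.
      by apply: (@ge0_integral_null_le _ _ _ (pix x) _ _ _ (mtN x) (pixsupp x)) => // g ng; rewrite fg.
    by apply: (@ge0_integral_null_le _ _ _ (pix x) _ _ _ (mtN x) (pixsupp x)) => // g ng; rewrite fg.
  symmetry.
  apply: (@mixture _ _ _ X G G R mu pix pi (fun g => g)) => //.
symmetry.
transitivity (\int[mu]_x \int[picx x]_h P h A); last first.
  symmetry; apply: (@mixture _ _ _ X G G R mu picx pi inv) => //.
  - exact: gpd_meas_inv hgpd.
apply: eq_integral => x _.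
have := hmk.2 (u x) setT A measurableT mA.
rewrite (_ : [set w | setT (w 0%N) /\ A (path_shift w)] = A); last first.
  rewrite -[RHS]hA; apply/seteqP; split => w /=; [by case|by move=> ?; split].
move=> ->; rewrite indicE mem_set // mul1e (gpd_s_unit hgpd).
rewrite (eq_integral (fun h => P h A)); last first.
  by move=> h /set_mem /= th; rewrite -th (gpd_unit_l hgpd).
rewrite [RHS](ge0_negligible_integral _ _ _ _ (picxsupp x)) //.
by rewrite setTD; congr (integral _ _ _); apply/seteqP; split => h /=;
  [move=> -> | move/contrapT].
Qed.
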